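(* For each integer $k\ge1$, the function $F_k:(\tfrac12,\tfrac34)\to\mathbb{R}_+$, $F_k(h)=\rho_h(k)$, is increasing. Consequently $\lim_{h\to\frac12+}\sum_{k=1}^\infty\rho_h^2(k)=0$.
   Context: $\rho_h(k)=\frac12\big((k+1)^{2h}+(k-1)^{2h}-2k^{2h}\big)$. *)

(* Defs.v *)
From HB Require Import structures.
From mathcomp Require Import all_boot all_order all_algebra.
From mathcomp Require Import all_classical all_reals all_analysis.
Set Implicit Arguments. Unset Strict Implicit. Unset Printing Implicit Defensive.
Import Order.TTheory GRing.Theory Num.Theory.
Local Open Scope ring_scope.

(* rho_h(k) = 1/2 ((k+1)^{2h} + (k-1)^{2h} - 2 k^{2h}), with real powers powR
   (note 0 `^ x = 0 for x > 0, so for k = 1 the middle term vanishes). *)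
Definition rho (R : realType) (h : R) (k : nat) : R :=
  2^-1 * ((k.+1%:R) `^ (2 * h) + (k.-1%:R) `^ (2 * h) - 2 * (k%:R `^ (2 * h))).

(* Main.v *)
Require Import Defs.
From HB Require Import structures.
From mathcomp Require Import all_boot all_order all_algebra.
From mathcomp Require Import all_classical all_reals all_analysis.
From mathcomp Require Import ring lra.
Import Order.TTheory GRing.Theory Num.Theory.
Import numFieldNormedType.Exports.
Local Open Scope ring_scope.
Local Open Scope classical_set_scope.

Section S.
Variable R : realType.

Lemma mvt_pos (f df : R -> R) (a b : R) :
  (forall x : R, 0 < x -> is_derive x 1 f (df x)) -> 0 < a -> a < b ->
  exists2 c, a < c < b & f b - f a = df c * (b - a).
Proof.
move=> fd a0 ab.
have [||c cab ->] := @MVT R f df a b ab.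
- move=> x; rewrite in_itv/= => /andP[ax _]; apply: fd; exact: lt_trans ax.
- have := (@derivable_within_continuous R R f `[a, b]%R). apply. move=> x.
  rewrite in_itv/= => /andP[ax _].
  by have /(_ (lt_le_trans a0 ax)) [] := fd x.
by exists c => //; move: cab; rewrite in_itv.
Qed.

Lemma deriv_pow (p x : R) : 0 < x -> is_derive x 1 (fun y : R => y `^ p) (p * x `^ (p - 1)).
Proof. move=> x0; exact: is_derive1_powR. Qed.

Lemma deriv_cpow (c p x : R) : 0 < x ->
  is_derive x 1 (fun y : R => c * y `^ p) (c * (p * x `^ (p - 1))).
Proof. move=> x0. apply: is_deriveZ. exact: is_derive1_powR. Qed.


Lemma sdiff (f df ddf : R -> R) (c : R) :
  (forall x : R, 0 < x -> is_derive x 1 f (df x)) ->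
  (forall x : R, 0 < x -> is_derive x 1 df (ddf x)) -> 1 < c ->
  exists eta, exists2 s, (c - 1 < eta < c + 1) /\ (0 < s < 2) &
    f (c + 1) + f (c - 1) - 2 * f c = ddf eta * s.
Proof.
move=> fd dfd c1.
have c0 : 0 < c by apply: lt_trans c1.
have [x1 /andP[cx1 x1c] e1] := @mvt_pos f df c (c + 1) fd c0 (ltr_pwDr ltr01 (lexx c)).
have [||x2 /andP[cx2 x2c] e2] := @mvt_pos f df (c - 1) c fd.
- by rewrite subr_gt0.
- by rewrite ltrBlDr ltrDl.
have x20 : 0 < x2 by apply: le_lt_trans cx2; rewrite subr_ge0 ltW.
have x21 : x2 < x1 by apply: lt_trans x2c cx1.
have [eta /andP[ex2 ex1] e3] := @mvt_pos df ddf x2 x1 dfd x20 x21.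
exists eta; exists (x1 - x2); last first.
  rewrite -e3.
  have -> : f (c + 1) + f (c - 1) - 2 * f c = (f (c + 1) - f c) - (f c - f (c - 1)) by ring.
  rewrite e1 e2; ring.
split; apply/andP; split.
- by apply: lt_trans ex2.
- by apply: lt_trans ex1 _.
- by rewrite subr_gt0.
- have : x1 - x2 < (c + 1) - (c - 1) by apply: ltrB.
  by have -> : c + 1 - (c - 1) = 2 by ring.
Qed.


Lemma rho1 (h : R) : 0 < h -> rho h 1 = 2^-1 * 2 `^ (2 * h) - 1.
Proof.
move=> h0; rewrite /rho /= powR0 ?mulf_neq0 ?gt_eqF// powR1 /=.
by field.
Qed.

Lemma rhoS (h : R) (m : nat) : let c := m.+2%:R in
  rho h m.+2 = 2^-1 * ((c + 1) `^ (2 * h) + (c - 1) `^ (2 * h) - 2 * c `^ (2 * h)).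
Proof.
move=> c; rewrite /rho /= /c natr1 -[in (m.+2)%:R - 1]natr1 addrK.
by [].
Qed.


Definition ddp (a x : R) := a * ((a - 1) * x `^ (a - 1 - 1)).

Lemma dpow (a : R) : forall x : R, 0 < x ->
  is_derive x 1 (fun y : R => y `^ a) ((fun y => a * y `^ (a - 1)) x).
Proof. by move=> x x0; apply: deriv_pow. Qed.

Lemma ddpow (a : R) : forall x : R, 0 < x ->
  is_derive x 1 (fun y : R => a * y `^ (a - 1)) (ddp a x).
Proof. by move=> x x0; apply: deriv_cpow. Qed.

Lemma rho_ge0 (h : R) (k : nat) : (1 <= k)%N -> 2^-1 < h -> 0 <= rho h k.
Proof.
move=> k1 h2; have h0 : 0 < h by apply: lt_trans h2.
case: k k1 => [//|[_|m _]].
  rewrite rho1 //.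
  have : 2 <= 2 `^ (2 * h) :> R.
    by apply: le1r_powR; [rewrite ler1n | lra].
  lra.
rewrite rhoS.
have c1 : 1 < m.+2%:R :> R by rewrite ltr1n.
have [eta [s [/andP[e1 e2] /andP[s0 s2]] ->]] :=
  @sdiff _ _ (ddp (2 * h)) _ (@dpow (2 * h)) (@ddpow (2 * h)) c1.
have eta0 : 0 < eta.
  by apply: le_lt_trans e1; rewrite subr_ge0 ltW.
apply: mulr_ge0; first lra.
apply: mulr_ge0; last lra.
rewrite /ddp; apply: mulr_ge0; first lra.
apply: mulr_ge0; [lra | exact: powR_ge0].
Qed.

Lemma rho_incr (h1 h2 : R) (k : nat) : (1 <= k)%N -> 2^-1 < h1 -> h1 < h2 ->
  rho h1 k < rho h2 k.
Proof.
move=> k1 h1g h12; have h0 : 0 < h1 by apply: lt_trans h1g.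
have h20 : 0 < h2 by apply: lt_trans h12.
case: k k1 => [//|[_|m _]].
  rewrite !rho1 //.
  have : 2 `^ (2 * h1) < 2 `^ (2 * h2) :> R.
    rewrite /powR pnatr_eq0 /= ltr_expR ltr_pM2r ?ln_gt0 ?ltr1n //; lra.
  lra.
rewrite -subr_gt0 !rhoS.
set a1 := 2 * h1; set a2 := 2 * h2.
have a1g : 1 < a1 by rewrite /a1; lra.
have a12 : a1 < a2 by rewrite /a1 /a2; lra.
set c := m.+2%:R.
have c1 : 1 < c :> R by rewrite ltr1n.
pose psi := fun y : R => y `^ a2 - y `^ a1.
pose dpsi := fun y : R => a2 * y `^ (a2 - 1) - a1 * y `^ (a1 - 1).
pose ddpsi := fun y : R => ddp a2 y - ddp a1 y.
have d1 : forall x : R, 0 < x -> is_derive x 1 psi (dpsi x).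
  by move=> x x0; apply: is_deriveB; apply: deriv_pow.
have d2 : forall x : R, 0 < x -> is_derive x 1 dpsi (ddpsi x).
  by move=> x x0; apply: is_deriveB; apply: deriv_cpow.
have [eta [s [/andP[e1 e2] /andP[s0 s2]] E]] := @sdiff psi dpsi ddpsi c d1 d2 c1.
have -> : 2^-1 * ((c + 1) `^ a2 + (c - 1) `^ a2 - 2 * c `^ a2) -
    2^-1 * ((c + 1) `^ a1 + (c - 1) `^ a1 - 2 * c `^ a1) =
    2^-1 * (psi (c + 1) + psi (c - 1) - 2 * psi c) by rewrite /psi; ring.
rewrite E.
have eta1 : 1 < eta.
  apply: le_lt_trans e1; rewrite lerBrDr /c -natr1 lerD2r.
  by rewrite ler1n.
have P0 : 0 < eta `^ (a1 - 1 - 1) by apply: powR_gt0; lra.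
have PQ : eta `^ (a1 - 1 - 1) <= eta `^ (a2 - 1 - 1).
  by apply: ler_powR; lra.
rewrite /ddpsi /ddp.
apply: mulr_gt0; first lra.
apply: mulr_gt0; last lra.
set P := eta `^ (a1 - 1 - 1) in P0 PQ *; set Q := eta `^ (a2 - 1 - 1) in PQ *.
have H1 : 0 < (a2 * (a2 - 1) - a1 * (a1 - 1)) * P by apply: mulr_gt0 => //; nra.
have H2 : 0 <= (a2 * (a2 - 1)) * (Q - P) by apply: mulr_ge0; nra.
nra.
Qed.


Lemma powR_anti (u v r : R) : 0 < u -> u <= v -> 0 <= r -> v `^ (-r) <= u `^ (-r).
Proof.
move=> u0 uv r0; rewrite !powRN lef_pV2 ?posrE ?powR_gt0 //; last exact: lt_le_trans uv.
by apply: ge0_ler_powR => //; rewrite nnegrE ltW //; apply: lt_le_trans uv.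
Qed.

Lemma ln2_le1 : ln (2 : R) <= 1.
Proof.
have := expR_ge1Dx (ln (2 : R)); rewrite lnK ?posrE //; lra.
Qed.

Lemma rho1_le (h : R) : 2^-1 < h -> h < 5/8 -> rho h 1 <= 2 * (2 * h - 1).
Proof.
move=> h1 h2; rewrite rho1; last lra.
have -> : 2^-1 * 2 `^ (2 * h) = 2 `^ (2 * h - 1) :> R.
  rewrite powRB ?pnatr_eq0 ?implybT // powRr1 //; by rewrite mulrC.
rewrite /powR pnatr_eq0 /=.
set t := (2 * h - 1) * ln 2.
have l2 : 0 < ln (2 : R) by rewrite ln_gt0 // ltr1n.
have l21 := ln2_le1.
have t0 : 0 <= t by rewrite /t; apply: mulr_ge0; lra.
have t1 : t <= 2 * h - 1 by rewrite /t; nra.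
have EF : expR t * expR (- t) = 1 by rewrite -expRD subrr expR0.
have F : 1 - t <= expR (- t) by have := expR_ge1Dx (- t); lra.
have E0 : 0 < expR t by apply: expR_gt0.
have H : expR t * (1 - t) <= 1 by rewrite -EF; apply: ler_wpM2l => //; lra.
nra.
Qed.


Lemma rhoS_le (h : R) (m : nat) : 2^-1 < h -> h < 5/8 ->
  rho h m.+2 <= 2 * (2 * h - 1) * (m.+1%:R) `^ (- (3/4)).
Proof.
move=> h1 h2; rewrite rhoS.
set a := 2 * h; set c := m.+2%:R.
have c1 : 1 < c :> R by rewrite ltr1n.
have [eta [s [/andP[e1 e2] /andP[s0 s2]] ->]] :=
  @sdiff _ _ (ddp a) _ (@dpow a) (@ddpow a) c1.
have cm : c - 1 = m.+1%:R by rewrite /c -natr1 addrK.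
rewrite cm in e1.
have m1 : 1 <= m.+1%:R :> R by rewrite ler1n.
have eta1 : 1 <= eta by apply: ltW; apply: le_lt_trans e1.
have W1 : eta `^ (a - 1 - 1) <= eta `^ (- (3/4)) by apply: ler_powR => //; rewrite /a; lra.
have W2 : eta `^ (- (3/4)) <= (m.+1%:R) `^ (- (3/4)).
  by apply: powR_anti; [lra | exact: ltW | lra].
have W0 : 0 <= eta `^ (a - 1 - 1) by apply: powR_ge0.
set W := eta `^ (a - 1 - 1) in W0 W1 *.
set V := (m.+1%:R) `^ (- (3/4)) in W2 *.
rewrite /ddp.
have aa : 0 <= a * (a - 1) <= 5/4 * (2 * h - 1) by rewrite /a; apply/andP; split; nra.
have WV : W <= V by lra.
have H1 : a * (a - 1) * W <= 5/4 * (2 * h - 1) * V.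
  apply: ler_pM; [nra | lra | lra | lra].
have H2 : 0 <= a * (a - 1) * W by apply: mulr_ge0; lra.
have H3 : 0 <= (2 * h - 1) * V by apply: mulr_ge0; lra.
rewrite mulrA; set X := a * (a - 1) * W in H1 H2 *.
have H4 : X * s <= X * 2 by apply: ler_wpM2l => //; lra.
have H5 : 2 * (2 * h - 1) * V = 2 * ((2 * h - 1) * V) by rewrite mulrA.
have H6 : 5/4 * (2 * h - 1) * V = 5/4 * ((2 * h - 1) * V) by rewrite mulrA.
rewrite /a H5; rewrite H6 in H1; set Y := (2 * h - 1) * V in H1 H3 *; lra.
Qed.

Lemma powR_sq (x r : R) : 0 < x -> (x `^ r) ^+ 2 = x `^ (r + r).
Proof. by move=> x0; rewrite expr2 -powRD // (gt_eqF x0) implybT. Qed.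

Lemma rhoS_sq (h : R) (m : nat) : 2^-1 < h -> h < 5/8 ->
  (rho h m.+2) ^+ 2 <= 4 * (2 * h - 1) ^+ 2 * (m.+1%:R) `^ (- (3/2)).
Proof.
move=> h1 h2.
have r0 := @rho_ge0 h m.+2 isT h1.
have := @rhoS_le h m h1 h2.
have -> : - (3/2) = - (3/4) + - (3/4) :> R by field.
rewrite -powR_sq ?ltr0n //.
have V0 : 0 <= (m.+1%:R) `^ (- (3/4)) :> R by apply: powR_ge0.
set V := (m.+1%:R) `^ (- (3/4)) in V0 *.
move=> H.
have : (rho h m.+2) ^+ 2 <= (2 * (2 * h - 1) * V) ^+ 2.
  by rewrite ler_sqr ?nnegrE //; apply: mulr_ge0 => //; lra.
move=> H'; apply: (le_trans H'); rewrite !exprMn; lra.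
Qed.

Lemma tele (x : R) : 1 <= x ->
  (x + 1) `^ (- (3/2)) <= 2 * (x `^ (- 2^-1) - (x + 1) `^ (- 2^-1)).
Proof.
move=> x1.
have x0 : 0 < x by lra.
have [xi /andP[xi1 xi2] E] := @mvt_pos _ _ x (x + 1) (@dpow (- 2^-1)) x0 (ltr_pwDr ltr01 (lexx x)).
have -> : x `^ (- 2^-1) - (x + 1) `^ (- 2^-1) = - ((x + 1) `^ (- 2^-1) - x `^ (- 2^-1)) by ring.
rewrite E.
have -> : (- 2^-1 - 1) = - (3/2) :> R by field.
have : (x + 1) `^ (- (3/2)) <= xi `^ (- (3/2)).
  by apply: powR_anti; lra.
have -> : x + 1 - x = 1 by ring.
lra.
Qed.


Lemma rho1_sq (h : R) : 2^-1 < h -> h < 5/8 -> (rho h 1) ^+ 2 <= 4 * (2 * h - 1) ^+ 2.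
Proof.
move=> h1 h2; have r0 := @rho_ge0 h 1 isT h1; have r1 := rho1_le h h1 h2.
have : (rho h 1) ^+ 2 <= (2 * (2 * h - 1)) ^+ 2.
  by rewrite ler_sqr ?nnegrE //; lra.
move=> H; apply: (le_trans H); rewrite exprMn; lra.
Qed.

Lemma psum_inv (h : R) (n : nat) : 2^-1 < h -> h < 5/8 ->
  \sum_(1 <= k < n.+3) (rho h k) ^+ 2 <=
    16 * (2 * h - 1) ^+ 2 - 8 * (2 * h - 1) ^+ 2 * (n.+1%:R) `^ (- 2^-1).
Proof.
move=> h1 h2; set E := (2 * h - 1) ^+ 2.
have E0 : 0 <= E by apply: sqr_ge0.
elim: n => [|n IH].
  rewrite big_ltn // big_ltn // big_geq // addr0 powR1.
  have := rho1_sq h h1 h2; have := @rhoS_sq h 0 h1 h2; rewrite powR1 -/E.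
  lra.
rewrite big_nat_recr //=.
have T := @rhoS_sq h n.+1 h1 h2.
have x1 : 1 <= n.+1%:R :> R by rewrite ler1n.
have := tele _ x1; rewrite natr1 => TL.
set A := (n.+1%:R) `^ (- 2^-1) in IH TL *.
set C := (n.+2%:R) `^ (- 2^-1) in TL *.
set B := (n.+2%:R) `^ (- (3/2)) in T TL *.
rewrite -/E in T.
have : E * B <= E * (2 * (A - C)) by apply: ler_wpM2l.
lra.
Qed.

Lemma psum_le (h : R) (n : nat) : 2^-1 < h -> h < 5/8 ->
  \sum_(1 <= k < n) (rho h k) ^+ 2 <= 16 * (2 * h - 1) ^+ 2.
Proof.
move=> h1 h2.
have E0 : 0 <= (2 * h - 1) ^+ 2 by apply: sqr_ge0.
case: n => [|[|[|n]]].
- by rewrite big_geq //; lra.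
- by rewrite big_geq //; lra.
- rewrite big_ltn // big_geq // addr0; have := rho1_sq h h1 h2; lra.
- apply: (le_trans (psum_inv h n h1 h2)).
  have : 0 <= (2 * h - 1) ^+ 2 * (n.+1%:R) `^ (- 2^-1) by apply: mulr_ge0 => //; apply: powR_ge0.
  lra.
Qed.

End S.

Lemma limS_bound (R : realType) (h : R) : 2^-1 < h -> h < 5/8 ->
  0 <= limn (fun n => \sum_(1 <= k < n) (rho h k) ^+ 2) <= 16 * (2 * h - 1) ^+ 2.
Proof.
move=> h1 h2; set u := fun n => _.
have nd : nondecreasing_seq u.
  apply/nondecreasing_seqP => n; rewrite /u.
  case: n => [|n]; first by rewrite !big_geq.
  by rewrite [X in _ <= X]big_nat_recr //= lerDl sqr_ge0.
have ub : has_ubound (range u).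
  exists (16 * (2 * h - 1) ^+ 2) => _ [n _ <-]; exact: psum_le.
have cu : cvgn u by apply: nondecreasing_is_cvgn.
apply/andP; split.
- apply: limr_ge => //; near=> n; apply: sumr_ge0 => k _; exact: sqr_ge0.
- apply: limr_le => //; near=> n; exact: psum_le.
Unshelve. all: by end_near.
Qed.

Theorem lemmaA3 (R : realType) :
  (forall k : nat, (1 <= k)%N ->
     (forall h : R, 2^-1 < h < 3/4 -> 0 <= rho h k) /\
     (forall h1 h2 : R, 2^-1 < h1 -> h1 < h2 -> h2 < 3/4 -> rho h1 k < rho h2 k)) /\
  ((fun h : R => limn (fun n => \sum_(1 <= k < n) (rho h k) ^+ 2)) x @[x --> (2^-1 : R)^'+] --> (0 : R)).
Proof.
split.
  move=> k k1; split.
  - by move=> h /andP[h1 _]; apply: rho_ge0.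
  - by move=> h1 h2 h1g h12 _; apply: rho_incr.
apply/cvgrPdist_le => e e0.
have d0 : (2^-1 : R) < 2^-1 + Num.min (1/8) (e/8).
  by rewrite ltrDl lt_min; apply/andP; split; lra.
near=> h.
have hg : 2^-1 < h by near: h; exact: nbhs_right_gt.
have hl : h < 2^-1 + Num.min (1/8) (e/8) by near: h; exact: nbhs_right_lt.
move: hl; rewrite -ltrBlDl lt_min => /andP[hl1 hl2].
have h58 : h < 5/8 by lra.
have /andP[L0 L1] := @limS_bound R h hg h58.
rewrite sub0r normrN ger0_norm //; apply: (le_trans L1).
have ep0 : 0 <= 2 * h - 1 by lra.
have ep1 : 2 * h - 1 <= 1/4 by lra.
have ep2 : 2 * h - 1 <= e/4 by lra.
have : (2 * h - 1) ^+ 2 <= 1/4 * (e/4) by rewrite expr2; apply: ler_pM => //; lra.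
lra.
Unshelve. all: by end_near.
Qed.
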